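(* For each integer $r\ge 2$, the matrix $A_r$ is $2$-modular.
   Context: An integer matrix $A$ is $\Delta$-modular if the determinant of every $\operatorname{rank}(A)\times\operatorname{rank}(A)$ submatrix has absolute value at most $\Delta$. $D_r$ denotes the $r\times\binom r2$ matrix whose columns are all vectors in $\mathbb{Z}^r$ with exactly two nonzero entries, the first (topmost) equal to $1$ and the second equal to $-1$. $A_r$ is the $r\times(\binom{r+2}{2}-2)$ matrix $[\,I_r\mid D_r\mid B_r\,]$, where $B_r$ is the $r\times(r-1)$ matrix whose first row consists entirely of $1$'s and whose remaining $r-1$ rows form $I_{r-1}$. *)

(* Defs.v *)
From HB Require Import structures.
From mathcomp Require Import all_boot all_order all_algebra.
Set Implicit Arguments. Unset Strict Implicit. Unset Printing Implicit Defensive.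
Import Order.TTheory GRing.Theory Num.Theory.
Local Open Scope ring_scope.

Definition int_rank m n (A : 'M[int]_(m, n)) : nat :=
  \rank (map_mx (fun z : int => z%:~R : rat) A).

Definition Delta_modular m n (A : 'M[int]_(m, n)) (Delta : int) : Prop :=
  forall (f : 'I_(int_rank A) -> 'I_m) (g : 'I_(int_rank A) -> 'I_n),
    injective f -> injective g -> `|\det (mxsub f g A)| <= Delta.

Definition Dpairs (r : nat) : {set 'I_r * 'I_r} :=
  [set p : 'I_r * 'I_r | (p.1 < p.2)%N].

Definition Dmx (r : nat) : 'M[int]_(r, #|Dpairs r|) :=
  \matrix_(i < r, k < #|Dpairs r|)
    let p := enum_val k in ((i == p.1)%:R - (i == p.2)%:R).

Definition Bmx (r : nat) : 'M[int]_(r, r.-1) :=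
  \matrix_(i < r, j < r.-1)
    (if (i == 0 :> nat) then 1 else ((i : nat) == j.+1)%:R).

Definition Amx (r : nat) : 'M[int]_(r, r + #|Dpairs r| + r.-1) :=
  row_mx (row_mx 1%:M (Dmx r)) (Bmx r).

(* Main.v *)
Set Warnings "-all".
Require Import Defs.
From HB Require Import structures.
From mathcomp Require Import all_boot all_order all_algebra.
From mathcomp Require Import zify.
Set Implicit Arguments. Unset Strict Implicit. Unset Printing Implicit Defensive.
Import Order.TTheory GRing.Theory Num.Theory.
Local Open Scope ring_scope.

Definition TUcol (T : eqType) (w : T -> int) :=
  (forall x, `|w x| <= 1) /\
  (forall x y, x != y -> w x != 0 -> w y != 0 -> w x + w y = 0).

Lemma TUcol_ext (T : eqType) (w w' : T -> int) :
  (forall x, w x = w' x) -> TUcol w -> TUcol w'.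
Proof. by move=> E [H1 H2]; split=> [x|x y]; rewrite -!E; [exact: H1|exact: H2]. Qed.

Lemma TUcol_comp (T U : eqType) (f : T -> U) (w : U -> int) :
  injective f -> TUcol w -> TUcol (fun x => w (f x)).
Proof.
move=> fi [H1 H2]; split=> [x|x y xy]; first exact: H1.
by apply: H2; rewrite (inj_eq fi).
Qed.

Lemma TU_det n (M : 'M[int]_n) : (forall c, TUcol (fun i => M i c)) -> `|\det M| <= 1.
Proof.
elim: n M => [|n IH] M HM; first by rewrite det_mx00 normr1.
case: (boolP [exists c, exists i, [forall j, (j != i) ==> (M j c == 0)]]).
  case/existsP => c /existsP [i /forallP Hi].
  rewrite (expand_det_col _ c) (bigD1 i) //= big1 ?addr0; last first.
    by move=> j ji; rewrite (eqP (implyP (Hi j) ji)) mul0r.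
  rewrite /cofactor normrM normrM normr_sign mul1r.
  apply: mulr_ile1 => //; first by case: (HM c).
  apply: IH => c'; apply: (@TUcol_ext _ (fun k => M (lift i k) (lift c c'))).
    by move=> k; rewrite !mxE.
  apply: (TUcol_comp (w := fun k => M k (lift c c'))) (HM _); exact: lift_inj.
move=> Hn.
have H0 : \det M == 0.
  apply/det0P; exists (const_mx 1).
    by apply/eqP => /matrixP /(_ 0 0); rewrite !mxE.
  apply/matrixP => z c; rewrite !mxE.
  have Hc i : exists2 j, j != i & M j c != 0.
    case: (boolP [exists j, (j != i) && (M j c != 0)]) => [/existsP [j /andP[]]|H].
      by exists j.
    exfalso; move/negP: Hn; apply.
    apply/existsP; exists c; apply/existsP; exists i; apply/forallP => j.
    apply/implyP => ji; apply: contraNT H => Mj; apply/existsP; exists j; exact/andP.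
  have [j _ Mj] := Hc 0.
  have [k kj Mk] := Hc j.
  rewrite (bigD1 j) //= (bigD1 k) ?kj //=.
  rewrite big1 ?addr0.
    rewrite !mxE !mul1r; have [_ H2] := HM c.
    by apply: H2 => //; rewrite eq_sym.
  move=> l /andP [lj lk]; rewrite mxE mul1r.
  have [_ H2] := HM c.
  apply/eqP; apply: contraT => Ml.
  have e1 := H2 _ _ lj Ml Mj.
  have e2 := H2 _ _ lk Ml Mk.
  have e3 := H2 _ _ kj Mk Mj.
  move: Ml; have -> : M l c = 0 by lia.
  by rewrite eqxx.
by rewrite (eqP H0) normr0.
Qed.

Lemma split_det n (M : 'M[int]_n) v (s : 'I_n -> bool) :
 (forall c, TUcol (fun i => if (i == v) && s c then 0 else M i c)) ->
 (forall c, TUcol (fun i => if i == v then (if s c then - M v c else 0) else M i c)) ->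
 `|\det M| <= 2.
Proof.
move=> H1 H2.
pose P1 := \matrix_(i, c) (if (i == v) && s c then 0 else M i c).
pose P2 := \matrix_(i, c) (if i == v then (if s c then - M v c else 0) else M i c).
have := @determinant_multilinear _ _ M P1 P2 v 1 (-1).
rewrite !mul1r mulN1r => -> //.
- apply: (le_trans (ler_normB _ _)).
  have -> : (2 : int) = 1 + 1 by [].
  apply: lerD; apply: TU_det => c.
    by apply: TUcol_ext (H1 c) => i; rewrite mxE.
  by apply: TUcol_ext (H2 c) => i; rewrite mxE.
- apply/rowP => c; rewrite !mxE eqxx /=; case: (s c) => /=; lia.
- by apply/matrixP => i c; rewrite !mxE; have := neq_lift v i; rewrite eq_sym => /negbTE ->.
- by apply/matrixP => i c; rewrite !mxE; have := neq_lift v i; rewrite eq_sym => /negbTE ->.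
Qed.
Lemma TUdiff r (a b : nat) : a != b ->
  TUcol (fun x : 'I_r => ((x:nat) == a)%:R - ((x:nat) == b)%:R : int).
Proof.
move=> ab; split=> [x|x y xy].
  by case: eqP; case: eqP => //= *; subst; rewrite ?eqxx in ab.
have xy' : (x:nat) != y by [].
case: eqP; case: eqP; case: eqP; case: eqP => //=; lia.
Qed.

Lemma Dent r (x : 'I_r) (k : 'I_#|Dpairs r|) : Dmx r x k =
  (((x:nat) == (enum_val k).1)%:R - ((x:nat) == (enum_val k).2)%:R).
Proof. by rewrite mxE. Qed.

Lemma Dneq r (k : 'I_#|Dpairs r|) : ((enum_val k).1 : nat) != (enum_val k).2 :> nat.
Proof.
have := enum_valP k; rewrite inE => lt; by rewrite neq_ltn lt.
Qed.

Lemma L1 r (j : 'I_(r + #|Dpairs r| + r.-1)) :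
  TUcol (fun x : 'I_r => if ((x:nat) == 0%N) && (r + #|Dpairs r| <= j)%N then 0 else Amx r x j).
Proof.
rewrite -(splitK j); case: (split j) => [j1|k] /=; rewrite /Amx.
  have -> : (r + #|Dpairs r| <= lshift r.-1 j1)%N = false.
    apply/negbTE; rewrite -ltnNge.
    exact (ltn_ord j1).
  rewrite -(splitK j1); case: (split j1) => [k|k] /=.
    have kr : (k:nat) != r by rewrite neq_ltn ltn_ord.
    apply: TUcol_ext (TUdiff r kr) => x.
    by rewrite /= andbF row_mxEl row_mxEl !mxE (ltn_eqF (ltn_ord x)) subr0.
  apply: TUcol_ext (TUdiff r (Dneq k)) => x.
  by rewrite /= andbF row_mxEl row_mxEr Dent.
have kr : (k.+1 != r)%N by rewrite neq_ltn; have := ltn_ord k; lia.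
apply: TUcol_ext (TUdiff r kr) => x.
have -> : (r + #|Dpairs r| <= rshift (r + #|Dpairs r|) k)%N by exact: leq_addr.
rewrite andbT row_mxEr !mxE (ltn_eqF (ltn_ord x)) subr0.
by case: (eqVneq (x:nat) 0%N) => [->|x0] //; rewrite (negbTE x0).
Qed.

Lemma L2 r (j : 'I_(r + #|Dpairs r| + r.-1)) :
  TUcol (fun x : 'I_r => if ((x:nat) == 0%N) then (if (r + #|Dpairs r| <= j)%N then - Amx r x j else 0) else Amx r x j).
Proof.
rewrite -(splitK j); case: (split j) => [j1|k] /=; rewrite /Amx.
  have -> : (r + #|Dpairs r| <= lshift r.-1 j1)%N = false.
    apply/negbTE; rewrite -ltnNge.
    exact (ltn_ord j1).
  rewrite -(splitK j1); case: (split j1) => [k|k] /=.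
    case: (eqVneq (k:nat) 0%N) => k0.
      have rr : (r != r.+1)%N by rewrite neq_ltn ltnSn.
      apply: TUcol_ext (TUdiff r rr) => x.
      rewrite /= row_mxEl row_mxEl !mxE (ltn_eqF (ltn_ord x)).
      rewrite (ltn_eqF (leqW (ltn_ord x))) subr0.
      by case: eqP => // x0; case: eqP => // xk; move: x0; rewrite xk k0.
    have kr : (k:nat) != r by rewrite neq_ltn ltn_ord.
    apply: TUcol_ext (TUdiff r kr) => x.
    rewrite /= row_mxEl row_mxEl !mxE (ltn_eqF (ltn_ord x)) subr0.
    case: (eqVneq (x:nat) 0%N) => [x0|] //.
    have -> : ((x:nat) == k) = false by apply/negbTE; apply/eqP => xk; move: k0; rewrite -xk x0 eqxx.
    by [].
  case: (eqVneq ((enum_val k).1 : nat) 0%N) => k0.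
    have rr : (r != (enum_val k).2)%N by rewrite neq_ltn ltn_ord orbT.
    apply: TUcol_ext (TUdiff r rr) => x.
    rewrite /= row_mxEl row_mxEr Dent (ltn_eqF (ltn_ord x)) sub0r.
    have b0 : ((enum_val k).2 : nat) != 0%N by have := Dneq k; rewrite k0 eq_sym.
    case: (eqVneq (x:nat) 0%N) => [x0|xn].
      by rewrite x0 /= eq_sym (negbTE b0) mulr0n oppr0.
    by rewrite k0 !(negbTE xn) sub0r.
  apply: TUcol_ext (TUdiff r (Dneq k)) => x.
  rewrite /= row_mxEl row_mxEr Dent.
  case: (eqVneq (x:nat) 0%N) => [x0|] //; rewrite x0 /=.
  have := enum_valP k; rewrite inE => lt.
  have h1 : (0%N == (enum_val k).1) = false by rewrite eq_sym (negbTE k0).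
  have h2 : (0%N == (enum_val k).2) = false.
    by apply/negbTE; rewrite neq_ltn (leq_ltn_trans (leq0n _) lt).
  by rewrite h1 h2 subrr.
have kr : (k.+1 != 0)%N by [].
apply: TUcol_ext (TUdiff r kr) => x.
have -> : (r + #|Dpairs r| <= rshift (r + #|Dpairs r|) k)%N by exact: leq_addr.
rewrite row_mxEr !mxE.
case: eqP => [x0|x0]; first by rewrite x0 /= ?subr0 ?sub0r.
by case: eqP => _ /=; rewrite ?sub0r ?subr0.
Qed.

Lemma rankA r : int_rank (Amx r) = r.
Proof.
rewrite /int_rank /Amx !map_row_mx; apply/eqP; rewrite eqn_leq rank_leq_row /=.
set B := map_mx _ (Bmx r); set D := map_mx _ (Dmx r).
have I1 : map_mx (fun z : int => z%:~R : rat) (1%:M : 'M[int]_r) = 1%:M.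
  by apply/matrixP => i j; rewrite !mxE; case: (i == j).
rewrite I1.
have E : row_mx (row_mx 1%:M D) B *m col_mx (col_mx 1%:M 0) 0 = 1%:M :> 'M[rat]_r.
  by rewrite !mul_row_col !mulmx0 !addr0 mulmx1.
rewrite -{1}(mxrank1 rat r) -{1}E; exact: mxrankM_maxl.
Qed.

Theorem lemma3p1 (r : nat) (hr : (2 <= r)%N) : Delta_modular (Amx r) 2.
Proof.
rewrite /Delta_modular rankA => f g fi gi.
have r0 : (0 < r)%N by apply: leq_trans hr.
pose z0 : 'I_r := Ordinal r0.
pose v := invF fi z0.
have Hv i : (i == v) = ((f i : nat) == 0%N).
  by rewrite -(inj_eq fi) /v f_invF.
apply: (@split_det _ _ v (fun c => (r + #|Dpairs r| <= g c)%N)) => c.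
  apply: (@TUcol_ext _ (fun i => (fun x : 'I_r => if ((x:nat) == 0%N) && (r + #|Dpairs r| <= g c)%N then 0 else Amx r x (g c)) (f i))).
    by move=> i; rewrite Hv [mxsub _ _ _ _ _]mxE.
  exact: (TUcol_comp fi (L1 (g c))).
apply: (@TUcol_ext _ (fun i => (fun x : 'I_r => if ((x:nat) == 0%N) then (if (r + #|Dpairs r| <= g c)%N then - Amx r x (g c) else 0) else Amx r x (g c)) (f i))).
  move=> i; rewrite Hv [mxsub _ _ _ _ _]mxE [mxsub _ _ _ _ _]mxE /=.
  case: eqP => // fi0; rewrite /v f_invF.
  have -> : f i = z0 by apply: val_inj.
  by [].
exact: (TUcol_comp fi (L2 (g c))).
Qed.
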